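(* Let $X$ be an almost zero-dimensional space and $A\subset X$. If there is a $\sigma$C-set $B$ in $X$ with $\partial A\subset B\subset\overline A$, then $\overline A$ is a C-set in $X$.
   Context: All spaces are separable and metrizable. A subset $A$ of a space $X$ is a C-set in $X$ if $A$ is an intersection of clopen subsets of $X$; a $\sigma$C-set is a countable union of C-sets. $X$ is almost zero-dimensional if every point of $X$ has a neighborhood basis consisting of C-sets in $X$. $\partial A$ denotes the boundary of $A$ in $X$. *)

(* Defs.v *)
(* separable metrizable spaces, modelled as metric spaces
   (every notion below is topological, i.e. depends only on the induced topology). *)
From Stdlib Require Import Reals.
Open Scope R_scope.

Record MetricSpace := {
  carrier :> Type;
  dist : carrier -> carrier -> R;
  dist_nonneg : forall x y, 0 <= dist x y;
  dist_eq0 : forall x y, dist x y = 0 <-> x = y;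
  dist_sym : forall x y, dist x y = dist y x;
  dist_tri : forall x y z, dist x z <= dist x y + dist y z
}.

Section Topo.
Variable X : MetricSpace.

Definition subset (A B : X -> Prop) : Prop := forall x, A x -> B x.

Definition is_open (U : X -> Prop) : Prop :=
  forall x, U x -> exists eps, 0 < eps /\ forall y, dist X x y < eps -> U y.

Definition is_closed (F : X -> Prop) : Prop := is_open (fun x => ~ F x).

Definition clopen (U : X -> Prop) : Prop := is_open U /\ is_closed U.

Definition closure (A : X -> Prop) : X -> Prop :=
  fun x => forall eps, 0 < eps -> exists y, A y /\ dist X x y < eps.

Definition interior (A : X -> Prop) : X -> Prop :=
  fun x => exists eps, 0 < eps /\ forall y, dist X x y < eps -> A y.

Definition boundary (A : X -> Prop) : X -> Prop :=
  fun x => closure A x /\ closure (fun y => ~ A y) x.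

Definition C_set (A : X -> Prop) : Prop :=
  exists Fam : (X -> Prop) -> Prop,
    (forall U, Fam U -> clopen U) /\
    (forall x, A x <-> (forall U, Fam U -> U x)).

Definition sigmaC_set (B : X -> Prop) : Prop :=
  exists C : nat -> (X -> Prop),
    (forall n, C_set (C n)) /\ (forall x, B x <-> exists n, C n x).

Definition almost_zero_dimensional : Prop :=
  forall x (U : X -> Prop), is_open U -> U x ->
    exists V, C_set V /\ interior V x /\ subset V U.

Definition separable : Prop :=
  exists D : X -> Prop,
    (exists f : nat -> X, forall x, D x -> exists n, f n = x) /\
    (forall x, closure D x).

End Topo.

(* Main.v *)
Require Import Defs.
From Stdlib Require Import Reals Lra Lia Classical ClassicalEpsilon Cantor.
Import Defs.
Open Scope R_scope.

Lemma ball_open (X : MetricSpace) (y : X) r : is_open X (fun z => dist X y z < r).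
Proof.
  intros z Hz. exists (r - dist X y z). split; [lra|].
  intros w Hw. pose proof (dist_tri X y z w). lra.
Qed.

Lemma interior_open (X : MetricSpace) (G : X -> Prop) : is_open X (interior X G).
Proof.
  intros z [e [He Hz]]. exists e. split; auto.
  intros w Hw.
  exists (e - dist X z w). split; [lra|].
  intros v Hv. apply Hz. pose proof (dist_tri X z w v). lra.
Qed.

Lemma closure_closed (X : MetricSpace) (A : X -> Prop) : is_closed X (closure X A).
Proof.
  intros z Hz. unfold closure in Hz.
  apply not_all_ex_not in Hz. destruct Hz as [e He].
  apply imply_to_and in He. destruct He as [He He'].
  exists (e/2). split; [lra|]. intros w Hw Hcw.
  destruct (Hcw (e/2)) as [v [Av Dv]]; [lra|].
  apply He'. exists v. split; auto. pose proof (dist_tri X z w v). lra.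
Qed.

Lemma least_nat (P : nat -> Prop) : (exists n, P n) -> exists n, P n /\ forall j, (j < n)%nat -> ~ P j.
Proof.
  intros [n Hn]. revert Hn. induction n as [n IH] using Wf_nat.lt_wf_ind. intros Hn.
  destruct (classic (exists j, (j < n)%nat /\ P j)) as [[j [Hj Pj]]|Hno].
  - exact (IH j Hj Pj).
  - exists n. split; auto. intros j Hj Pj. apply Hno; eauto.
Qed.

Lemma finite_ball (X : MetricSpace) (O : nat -> X -> Prop) (z : X) (n : nat) :
  (forall j, (j < n)%nat -> exists e, 0 < e /\ forall w, dist X z w < e -> O j w) ->
  exists e, 0 < e /\ forall j w, (j < n)%nat -> dist X z w < e -> O j w.
Proof.
  induction n as [|n IH]; intros H.
  - exists 1. split; [lra|]. intros j w Hj. lia.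
  - destruct IH as [e1 [He1 H1]]. { intros j Hj. apply H. lia. }
    destruct (H n) as [e2 [He2 H2]]; [lia|].
    exists (Rmin e1 e2). split. { apply Rmin_pos; auto. }
    intros j w Hj Hw. assert (j < n \/ j = n)%nat as [Hl|Hl] by lia.
    + apply H1; auto. pose proof (Rmin_l e1 e2). lra.
    + subst j. apply H2. pose proof (Rmin_r e1 e2). lra.
Qed.

Lemma lindelof (X : MetricSpace) (Hsep : separable X) (O : X -> Prop)
  (Q : (X -> Prop) -> Prop) (G0 : X -> Prop) (HQ0 : Q G0) :
  (forall y, O y -> exists G, Q G /\ interior X G y) ->
  exists g : nat -> X -> Prop, (forall n, Q (g n)) /\ (forall y, O y -> exists n, interior X (g n) y).
Proof.
  intros Hcov. destruct Hsep as [D [[f Hf] Hd]].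
  set (bc := fun (n N : nat) (G : X -> Prop) => forall z, dist X (f n) z < / INR N -> G z).
  set (g2 := fun n N => epsilon (inhabits G0)
     (fun G => Q G /\ ((exists G', Q G' /\ bc n N G') -> bc n N G))).
  assert (Hg2 : forall n N, Q (g2 n N) /\ ((exists G', Q G' /\ bc n N G') -> bc n N (g2 n N))).
  { intros n N. unfold g2. apply epsilon_spec.
    destruct (classic (exists G', Q G' /\ bc n N G')) as [[G' HG']|Hno].
    - exists G'. split; [tauto|]. intros _. tauto.
    - exists G0. split; auto. intros h; exfalso; auto. }
  exists (fun k => g2 (fst (of_nat k)) (snd (of_nat k))).
  split. { intros k. apply Hg2. }
  intros y Hy. destruct (Hcov y Hy) as [G [QG [e [He HG]]]].
  destruct (archimed_cor1 (e/2)) as [N [HN HN0]]; [lra|].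
  assert (HrN : 0 < / INR N). { apply Rinv_0_lt_compat. apply lt_0_INR. lia. }
  destruct (Hd y (/ INR N) HrN) as [d [Dd Hyd]].
  destruct (Hf d Dd) as [n Hn]. subst d.
  exists (to_nat (n, N)). rewrite cancel_of_to. simpl.
  destruct (Hg2 n N) as [_ Hb].
  assert (Hbc : bc n N (g2 n N)).
  { apply Hb. exists G. split; auto. intros z Hz. apply HG.
    pose proof (dist_tri X y (f n) z). lra. }
  exists (/ INR N - dist X (f n) y). split.
  { rewrite dist_sym. lra. }
  intros w Hw. apply Hbc. pose proof (dist_tri X (f n) y w). lra.
Qed.

Lemma clopen_empty (X : MetricSpace) : clopen X (fun _ => False).
Proof. split. - intros z []. - intros z _. exists 1. split; [lra|]. auto. Qed.

Lemma Cset_empty (X : MetricSpace) : C_set X (fun _ => False).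
Proof.
  exists (fun U => U = (fun _ : X => False)). split.
  - intros U ->. apply clopen_empty.
  - intros x. split; [tauto|]. intros H. apply (H (fun _ => False)). reflexivity.
Qed.

Lemma open_ext (X : MetricSpace) (U V : X -> Prop) : (forall z, U z <-> V z) -> is_open X U -> is_open X V.
Proof.
  intros E HU z Vz. destruct (HU z) as [e [He H]]; [apply E; auto|].
  exists e. split; auto. intros w Hw. apply E; auto.
Qed.

Lemma clopen_compl (X : MetricSpace) (U : X -> Prop) : clopen X U -> clopen X (fun z => ~ U z).
Proof.
  intros [Ho Hc]. split; [exact Hc|].
  unfold is_closed. apply (open_ext X U); auto.
  intros z; split; [tauto|]. apply NNPP.
Qed.

Lemma clopen_union (X : MetricSpace) (U V : X -> Prop) : clopen X U -> clopen X V -> clopen X (fun z => U z \/ V z).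
Proof.
  intros [Uo Uc] [Vo Vc]. split.
  - intros z [Hz|Hz].
    + destruct (Uo z Hz) as [e [He H]]. exists e; split; auto.
    + destruct (Vo z Hz) as [e [He H]]. exists e; split; auto.
  - intros z Hz. destruct (Uc z) as [e1 [He1 H1]]; [tauto|].
    destruct (Vc z) as [e2 [He2 H2]]; [tauto|].
    exists (Rmin e1 e2). split; [apply Rmin_pos; auto|].
    intros w Hw [Hw'|Hw'].
    + apply (H1 w); auto. pose proof (Rmin_l e1 e2); lra.
    + apply (H2 w); auto. pose proof (Rmin_r e1 e2); lra.
Qed.

Lemma Cset_union (X : MetricSpace) (A1 A2 : X -> Prop) : C_set X A1 -> C_set X A2 -> C_set X (fun z => A1 z \/ A2 z).
Proof.
  intros [F1 [HF1 E1]] [F2 [HF2 E2]].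
  exists (fun W => exists U V, F1 U /\ F2 V /\ W = (fun z => U z \/ V z)). split.
  - intros W [U [V [FU [FV ->]]]]. apply clopen_union; auto.
  - intros x. split.
    + intros [H|H] W [U [V [FU [FV ->]]]].
      * left. apply E1; auto.
      * right. apply E2; auto.
    + intros H. apply NNPP. intros Hn.
      assert (~ A1 x) as N1 by tauto. assert (~ A2 x) as N2 by tauto.
      rewrite E1 in N1. rewrite E2 in N2.
      apply not_all_ex_not in N1. destruct N1 as [U HU]. apply imply_to_and in HU.
      apply not_all_ex_not in N2. destruct N2 as [V HV]. apply imply_to_and in HV.
      destruct (H (fun z => U z \/ V z)) as [h|h].
      * exists U, V. tauto.
      * tauto.
      * tauto.
Qed.

Lemma Cset_finunion (X : MetricSpace) (V : nat -> X -> Prop) (k : nat) :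
  (forall i, C_set X (V i)) -> C_set X (fun z => exists i, (i <= k)%nat /\ V i z).
Proof.
  intros HV. induction k as [|k IH].
  - destruct (HV 0%nat) as [F [HF E]]. exists F. split; auto.
    intros x. rewrite <- E. split.
    + intros [i [Hi Vi]]. assert (i = 0)%nat by lia. subst; auto.
    + intros h. exists 0%nat. split; auto.
  - destruct (Cset_union X _ _ IH (HV (S k))) as [F [HF E]]. exists F. split; auto.
    intros x. rewrite <- E. split.
    + intros [i [Hi Vi]]. assert (i <= k \/ i = S k)%nat as [h|h] by lia.
      * left. eauto.
      * subst. right. auto.
    + intros [[i [Hi Vi]]|h]; exists i || exists (S k); eauto.
Qed.

Lemma Cset_sep_point (X : MetricSpace) (C : X -> Prop) (y : X) : C_set X C -> ~ C y ->
  exists Z, clopen X Z /\ Z y /\ (forall w, C w -> ~ Z w).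
Proof.
  intros [F [HF E]] Hy. rewrite E in Hy.
  apply not_all_ex_not in Hy. destruct Hy as [U HU]. apply imply_to_and in HU.
  destruct HU as [FU NU]. exists (fun z => ~ U z). split; [apply clopen_compl; auto|].
  split; auto. intros w Cw h. apply h. apply E; auto.
Qed.

Lemma sep (X : MetricSpace) (Hsep : separable X) (C1 C2 : X -> Prop) :
  C_set X C1 -> C_set X C2 -> (forall z, C1 z -> ~ C2 z) ->
  exists G, clopen X G /\ (forall z, C1 z -> G z) /\ (forall z, C2 z -> ~ G z).
Proof.
  intros H1 H2 Hd.
  destruct (lindelof X Hsep (fun _ => True)
     (fun Z => clopen X Z /\ ((forall w, C1 w -> ~ Z w) \/ (forall w, C2 w -> ~ Z w)))
     (fun _ => False)) as [Z [HZ HZc]].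
  { split; [apply clopen_empty|]. left; auto. }
  { intros y _. destruct (classic (C1 y)) as [h|h].
    - destruct (Cset_sep_point X C2 y H2 (Hd y h)) as [W [cW [Wy Wn]]].
      exists W. split; [split; auto|]. destruct cW as [Wo _]. apply Wo; auto.
    - destruct (Cset_sep_point X C1 y H1 h) as [W [cW [Wy Wn]]].
      exists W. split; [split; auto|]. destruct cW as [Wo _]. apply Wo; auto. }
  set (K := fun z => exists n, Z n z /\ (forall j, (j < n)%nat -> ~ Z j z) /\ (forall w, C2 w -> ~ Z n w)).
  assert (Hleast : forall z, exists n, Z n z /\ forall j, (j < n)%nat -> ~ Z j z).
  { intros z. apply least_nat. destruct (HZc z I) as [n [e [He Hn]]].
    exists n. apply Hn. rewrite (proj2 (dist_eq0 X z z) eq_refl). lra. }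
  assert (Hnb : forall z n, Z n z -> (forall j, (j < n)%nat -> ~ Z j z) ->
     exists e, 0 < e /\ forall w, dist X z w < e -> Z n w /\ forall j, (j < n)%nat -> ~ Z j w).
  { intros z n Zn Zj.
    destruct (finite_ball X (fun j w => ~ Z j w) z n) as [e1 [He1 H1']].
    { intros j Hj. destruct (proj1 (HZ j)) as [_ Cj]. apply Cj. apply Zj; auto. }
    destruct (proj1 (proj1 (HZ n)) z Zn) as [e2 [He2 H2']].
    exists (Rmin e1 e2). split; [apply Rmin_pos; auto|]. intros w Hw. split.
    - apply H2'. pose proof (Rmin_r e1 e2); lra.
    - intros j Hj. apply H1'; auto. pose proof (Rmin_l e1 e2); lra. }
  exists K. split; [split|split].
  - intros z [n [Zn [Zj Zc]]]. destruct (Hnb z n Zn Zj) as [e [He Hw]].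
    exists e. split; auto. intros w Hdw. destruct (Hw w Hdw). exists n. auto.
  - intros z Kz. destruct (Hleast z) as [n [Zn Zj]].
    destruct (Hnb z n Zn Zj) as [e [He Hw]].
    exists e. split; auto. intros w Hdw [m [Zm [Zmj Zmc]]].
    destruct (Hw w Hdw) as [Znw Zjw].
    assert (m = n). { destruct (Nat.lt_total m n) as [h|[h|h]]; auto.
      - exfalso. apply (Zjw m h Zm).
      - exfalso. apply (Zmj n h Znw). }
    subst m. apply Kz. exists n. auto.
  - intros z C1z. destruct (Hleast z) as [n [Zn Zj]]. exists n. split; auto. split; auto.
    destruct (proj2 (HZ n)) as [h|h]; auto. exfalso. apply (h z); auto.
  - intros z C2z [n [Zn [_ Zc]]]. apply (Zc z); auto.
Qed.

Lemma dist_self (X : MetricSpace) (x : X) : dist X x x = 0.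
Proof. apply (proj2 (dist_eq0 X x x)). reflexivity. Qed.

Lemma interior_in (X : MetricSpace) (G : X -> Prop) x : interior X G x -> G x.
Proof. intros [e [He H]]. apply H. rewrite dist_self. lra. Qed.

Theorem theorem4p3 (X : MetricSpace) (HXsep : separable X)
  (HX : almost_zero_dimensional X) (A B : X -> Prop) :
  sigmaC_set X B ->
  subset X (boundary X A) B ->
  subset X B (closure X A) ->
  C_set X (closure X A).
Proof.
  intros [C [HC EB]] Hbd HBc.
  set (F := closure X A).
  assert (AF : forall y, A y -> F y).
  { intros y Ay e He. exists y. split; auto. rewrite dist_self. lra. }
  assert (CF : forall n y, C n y -> F y).
  { intros n y Cy. apply HBc. apply EB. eauto. }
  assert (Hint : forall y, F y -> ~ (exists n, C n y) -> interior X A y).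
  { intros y Fy Hn. assert (~ closure X (fun w => ~ A w) y) as Hc.
    { intros Hc. apply Hn. apply EB. apply Hbd. split; auto. }
    unfold closure in Hc. apply not_all_ex_not in Hc. destruct Hc as [e He].
    apply imply_to_and in He. destruct He as [He He'].
    exists e. split; auto. intros w Hw. apply NNPP. intros nA. apply He'. eauto. }
  destruct (lindelof X HXsep (interior X A)
     (fun T => C_set X T /\ subset X T F) (fun _ => False)) as [T [HT HTc]].
  { split; [apply Cset_empty|]. intros w []. }
  { intros y [e [He Hy]].
    destruct (HX y (fun w => dist X y w < e)) as [V [CV [IV SV]]].
    - apply ball_open.
    - rewrite dist_self; auto.
    - exists V. split; auto. split; auto. intros w Vw. apply AF, Hy, SV, Vw. }
  assert (Fo : is_open X (fun w => ~ F w)) by apply closure_closed.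
  destruct (lindelof X HXsep (fun w => ~ F w)
     (fun V => C_set X V /\ forall w, V w -> ~ F w) (fun _ => False)) as [V [HV HVc]].
  { split; [apply Cset_empty|]. intros w []. }
  { intros y Hy. destruct (HX y (fun w => ~ F w) Fo Hy) as [W [CW [IW SW]]].
    exists W. auto. }
  exists (fun U => clopen X U /\ subset X F U). split; [tauto|].
  intros z. split.
  { intros Fz U [_ HU]. auto. }
  intros Hall. apply NNPP. intros nFz.
  destruct (HX z (fun w => ~ F w) Fo nFz) as [Vz [CVz [IVz SVz]]].
  set (W := fun k w => Vz w \/ exists i, (i <= k)%nat /\ V i w).
  set (D := fun k w => C k w \/ T k w).
  assert (HG : forall k, exists G, clopen X G /\ (forall w, W k w -> G w) /\ (forall w, D k w -> ~ G w)).
  { intros k. apply sep; auto.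
    - apply Cset_union; auto. apply Cset_finunion. intros i; apply HV.
    - apply Cset_union; auto. apply HT.
    - intros w [h|[i [_ h]]] [d|d].
      + apply (SVz w h). eapply CF; eauto.
      + apply (SVz w h). apply (proj2 (HT k)); auto.
      + apply (proj2 (HV i) w h). eapply CF; eauto.
      + apply (proj2 (HV i) w h). apply (proj2 (HT k)); auto. }
  set (G := fun k => proj1_sig (constructive_indefinite_description _ (HG k))).
  assert (HGk : forall k, clopen X (G k) /\ (forall w, W k w -> G k w) /\ (forall w, D k w -> ~ G k w)).
  { intros k. exact (proj2_sig (constructive_indefinite_description _ (HG k))). }
  set (P := fun w => forall k, G k w).
  assert (PF : forall w, P w -> ~ F w).
  { intros w Pw Fw. destruct (classic (exists n, C n w)) as [[n Cn]|Hn].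
    - apply (proj2 (proj2 (HGk n)) w); [left; auto| apply Pw].
    - destruct (HTc w (Hint w Fw Hn)) as [m Im].
      apply (proj2 (proj2 (HGk m)) w); [right; apply interior_in; auto| apply Pw]. }
  assert (Pz : P z).
  { intros k. apply (proj1 (proj2 (HGk k))). left. apply interior_in; auto. }
  assert (cP : clopen X P).
  { split.
    - intros w Pw. destruct (HVc w (PF w Pw)) as [j [e1 [He1 H1]]].
      destruct (finite_ball X G w j) as [e2 [He2 H2]].
      { intros k _. destruct (proj1 (HGk k)) as [Go _]. apply Go, Pw. }
      exists (Rmin e1 e2). split; [apply Rmin_pos; auto|].
      intros w' Hw' k. destruct (Nat.lt_ge_cases k j) as [h|h].
      + apply H2; auto. pose proof (Rmin_r e1 e2); lra.
      + apply (proj1 (proj2 (HGk k))). right. exists j. split; auto.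
        apply H1. pose proof (Rmin_l e1 e2); lra.
    - intros w nPw. apply not_all_ex_not in nPw. destruct nPw as [k nG].
      destruct (proj1 (HGk k)) as [_ Gc]. destruct (Gc w nG) as [e [He H]].
      exists e. split; auto. intros w' Hw' Pw'. apply (H w' Hw'). apply Pw'. }
  apply (Hall (fun w => ~ P w)); auto.
  split; [apply clopen_compl; auto|].
  intros w Fw Pw. apply (PF w Pw Fw).
Qed.
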